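(* Let $\Phi\colon\mathcal{M}(2;\mathbb{C})\dashrightarrow\mathcal{M}(2;\mathbb{C})$ be a rational map compatible with conjugation. Then $\mathcal{D}$ is invariant by $\Phi$, i.e. $\Phi(\mathcal{D}\setminus\mathrm{Ind}\,\Phi)\subset\mathcal{D}$.
   Context: $\mathcal{D}$ is the set of diagonal $2\times2$ complex matrices, $\mathrm{Ind}\,\Phi$ the indeterminacy locus of $\Phi$. $\Phi$ is compatible with conjugation if $\mathrm{A}\Phi(\mathrm{M})\mathrm{A}^{-1}=\Phi(\mathrm{A}\mathrm{M}\mathrm{A}^{-1})$ for all $\mathrm{A}\in\mathrm{GL}(2;\mathbb{C})$ whenever $\mathrm{M}$ and $\mathrm{A}\mathrm{M}\mathrm{A}^{-1}$ are in $\mathcal{M}(2;\mathbb{C})\setminus\mathrm{Ind}\,\Phi$. *)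

(* Defs.v *)
From mathcomp Require Import all_boot all_algebra.
From mathcomp Require Import reals complex.
From mathcomp Require Import mpoly.
From Stdlib Require Import ClassicalEpsilon.

Set Implicit Arguments.
Unset Strict Implicit.
Unset Printing Implicit Defensive.

Import GRing.Theory.
Local Open Scope ring_scope.

Section RationalMaps.
Variable R : realType.

Definition Cplx : Type := (R[i])%C.

(* Polynomial functions on M(2;C) ~ C^4 (coordinates = the 4 entries). *)
Definition polyM2 := {mpoly Cplx[4]}.

Definition ratfunM2 := {fraction polyM2}.

Definition ratmapM2 := 'M[ratfunM2]_2.

Definition coordsM2 (M : 'M[Cplx]_2) : 'I_4 -> Cplx := fun k => mxvec M 0 k.

Definition regular_at (f : ratfunM2) (x : 'I_4 -> Cplx) : Prop :=
  exists P Q : polyM2, Q.@[x] != 0 /\ f = tofrac P / tofrac Q.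

Definition in_Ind (Phi : ratmapM2) (M : 'M[Cplx]_2) : Prop :=
  exists i j, ~ regular_at (Phi i j) (coordsM2 M).

(* Value of a rational function at a point where it is regular (well defined
   independently of the chosen representation P/Q); arbitrary elsewhere. *)
Definition ratfun_eval (f : ratfunM2) (x : 'I_4 -> Cplx) : Cplx :=
  epsilon (inhabits 0) (fun v => exists P Q : polyM2,
     [/\ Q.@[x] != 0, f = tofrac P / tofrac Q & v = P.@[x] / Q.@[x]]).

Definition ratmap_eval (Phi : ratmapM2) (M : 'M[Cplx]_2) : 'M[Cplx]_2 :=
  \matrix_(i, j) ratfun_eval (Phi i j) (coordsM2 M).

Definition compatible_with_conjugation (Phi : ratmapM2) : Prop :=
  forall (A M : 'M[Cplx]_2), A \in unitmx ->
    ~ in_Ind Phi M -> ~ in_Ind Phi (A *m M *m invmx A) ->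
    A *m ratmap_eval Phi M *m invmx A = ratmap_eval Phi (A *m M *m invmx A).

End RationalMaps.

(* Main.v *)
Require Import Defs.
From mathcomp Require Import all_boot all_algebra.
From mathcomp Require Import reals complex.
From mathcomp Require Import mpoly.

Local Open Scope ring_scope.
Import GRing.Theory Num.Theory.

Section Aux.
Variable F : comUnitRingType.

Definition Jmx : 'M[F]_2 :=
  \matrix_(i, j) (if i == j then (if i == 0 then 1 else -1) else 0).

Lemma Jmx_sq : Jmx *m Jmx = 1%:M.
Proof.
apply/matrixP => i j; rewrite !mxE big_ord_recl big_ord1 !mxE.
case: i => [[|[|]]] //= Hi; case: j => [[|[|]]] //= Hj;
  rewrite /= ?mulr0 ?mul0r ?addr0 ?add0r ?mulr1 //= ?mulrNN ?mulr1 //.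
Qed.

Lemma Jmx_unit : Jmx \in unitmx.
Proof. by case: (mulmx1_unit Jmx_sq). Qed.

Lemma Jmx_inv : invmx Jmx = Jmx.
Proof.
by rewrite -[invmx Jmx]mulmx1 -Jmx_sq mulmxA mulVmx ?Jmx_unit // mul1mx.
Qed.

Lemma Jconj (X : 'M[F]_2) i j :
  (Jmx *m X *m Jmx) i j =
  (if i == 0 then 1 else -1) * X i j * (if j == 0 then 1 else -1).
Proof.
rewrite !mxE big_ord_recl big_ord1 !mxE.
rewrite (big_ord_recl 1%N) big_ord1 !mxE.
rewrite (big_ord_recl 1%N) big_ord1 !mxE.
case: i => [[|[|]]] //= Hi; case: j => [[|[|]]] //= Hj;
  rewrite /= ?mulr0 ?mul0r ?addr0 ?add0r ?mulr1 ?mul1r //;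
  by repeat f_equal; apply: val_inj.
Qed.

Lemma diag_J (M : 'M[F]_2) : is_diag_mx M -> Jmx *m M *m Jmx = M.
Proof.
move=> /is_diag_mxP HM; apply/matrixP => i j; rewrite Jconj.
case: i => [[|[|]]] //= Hi; case: j => [[|[|]]] //= Hj;
  rewrite /= ?mulr1 ?mul1r ?mulrN ?mulNr ?opprK ?mulr1 ?mul1r //;
  by rewrite HM // oppr0.
Qed.
End Aux.

Theorem lemma2p1 (R : realType) (Phi : ratmapM2 R) :
  compatible_with_conjugation Phi ->
  forall M : 'M[Cplx R]_2, is_diag_mx M -> ~ in_Ind Phi M ->
    is_diag_mx (ratmap_eval Phi M).
Proof.
move=> Hc M HM HI.
have E := Hc (Jmx _) M (Jmx_unit _) HI.
rewrite Jmx_inv diag_J // in E.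
have E' := E HI.
apply/is_diag_mxP => i j Hij.
set X := ratmap_eval Phi M in E' *.
move/matrixP: E' => /(_ i j); rewrite Jconj.
case: i Hij => [[|[|]]] //= Hi; case: j => [[|[|]]] //= Hj _;
  rewrite ?mulr1 ?mul1r ?mulrN ?mulNr ?mulr1 => /eqP;
  rewrite -subr_eq0 -opprD oppr_eq0 ?mul1r -[_ + _]mulr2n mulrn_eq0 /= => /eqP //.
Qed.
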